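(* Let $\succeq$ be a preference order on $\mathcal L^\infty(\Omega,\mathcal F)$ satisfying (SM) and (PC). Then for all $f,g\in\mathcal L^\infty(\Omega,\mathcal F)$ with $f(\omega)\ge g(\omega)$ for all $\omega\in\Omega$ we have $f\succeq g$.
   Context: $\mathcal L^\infty(\Omega,\mathcal F)$: bounded $\mathcal F$-measurable real functions. Preference order: complete transitive relation; $\succ,\sim$ as usual. Null events $\mathcal N_\succeq=\{A\in\mathcal F: f1_A+g1_{A^c}\sim g\ \forall f,g\}$. (SM): for $A\notin\mathcal N_\succeq$, every $f$ and constants $x>y$: $x1_A+f1_{A^c}\succ y1_A+f1_{A^c}$. (PC): for uniformly bounded $f_n\to f$ pointwise and $g\succ f$ (resp. $f\succ g$) there is $N$ with $g\succ f_n$ (resp. $f_n\succ g$) for $n>N$. *)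

(* Defs.v *)
From HB Require Import structures.
From mathcomp Require Import all_boot all_order all_algebra.
From mathcomp Require Import all_classical all_reals all_analysis.
Set Implicit Arguments. Unset Strict Implicit. Unset Printing Implicit Defensive.
Import Order.TTheory GRing.Theory Num.Theory numFieldTopology.Exports numFieldNormedType.Exports.
Local Open Scope classical_set_scope.
Local Open Scope ring_scope.

Section Prefs.
Context {d : measure_display} {T : measurableType d} {R : realType}.

Definition Linf (f : T -> R) : Prop :=
  measurable_fun setT f /\ exists M : R, forall w, `|f w| <= M.

Definition spref (pref : (T -> R) -> (T -> R) -> Prop) f g :=
  pref f g /\ ~ pref g f.
Definition indiff (pref : (T -> R) -> (T -> R) -> Prop) f g :=
  pref f g /\ pref g f.

Definition preference_order (pref : (T -> R) -> (T -> R) -> Prop) : Prop :=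
  (forall f g, Linf f -> Linf g -> pref f g \/ pref g f) /\
  (forall f g h, Linf f -> Linf g -> Linf h -> pref f g -> pref g h -> pref f h).

Definition splice (A : set T) (f g : T -> R) : T -> R :=
  fun w => f w * \1_A w + g w * \1_(~` A) w.

Definition null_event (pref : (T -> R) -> (T -> R) -> Prop) (A : set T) : Prop :=
  measurable A /\
  forall f g, Linf f -> Linf g -> indiff pref (splice A f g) g.

Definition SM (pref : (T -> R) -> (T -> R) -> Prop) : Prop :=
  forall (A : set T), measurable A -> ~ null_event pref A ->
  forall f, Linf f -> forall x y : R, y < x ->
    spref pref (splice A (cst x) f) (splice A (cst y) f).

Definition PC (pref : (T -> R) -> (T -> R) -> Prop) : Prop :=
  forall (fn : nat -> T -> R) (f g : T -> R),
    (forall n, Linf (fn n)) -> Linf f -> Linf g ->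
    (exists M : R, forall n w, `|fn n w| <= M) ->
    (forall w, (fun n => fn n w) @ \oo --> f w) ->
    (spref pref g f -> exists N, forall n, (N < n)%N -> spref pref g (fn n)) /\
    (spref pref f g -> exists N, forall n, (N < n)%N -> spref pref (fn n) g).

End Prefs.

(* Main.v *)
Require Import Defs.
From HB Require Import structures.
From mathcomp Require Import all_boot all_order all_algebra.
From mathcomp Require Import all_classical all_reals all_analysis.
From mathcomp Require Import ring lra measurable_realfun.
Import Order.TTheory GRing.Theory Num.Theory numFieldTopology.Exports numFieldNormedType.Exports.
Local Open Scope classical_set_scope.
Local Open Scope ring_scope.

Definition dn {R : realType} (c0 e x : R) : R := c0 + (Num.truncn ((x - c0) / e))%:R * e.

Lemma dn_prop {R : realType} (c0 e x : R) : 0 < e -> c0 <= x ->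
  [/\ c0 <= dn c0 e x, dn c0 e x <= x & x < dn c0 e x + e].
Proof.
move=> e0 cx; rewrite /dn.
have h0 : 0 <= (x - c0) / e by apply: divr_ge0; lra.
have /andP[h1 h2] := truncn_itv h0.
set t := (Num.truncn _)%:R in h1 h2 *.
have t0 : 0 <= t by rewrite /t ler0n.
have h1' : t * e <= x - c0 by rewrite -ler_pdivlMr.
have h2' : x - c0 < t * e + e.
  have : (x - c0) / e < t + 1 by rewrite /t natr1.
  by rewrite ltr_pdivrMr // mulrDl mul1r.
split; [have := mulr_ge0 t0 (ltW e0); lra| lra| lra].
Qed.

Lemma dn_mono {R : realType} (c0 e : R) : 0 < e -> nondecreasing_fun (dn c0 e).
Proof.
move=> e0 x y xy; rewrite /dn lerD2l ler_wpM2r ?(ltW e0) // ler_nat le_truncn //.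
rewrite ler_wpM2r // ?invr_ge0 ?(ltW e0) //; lra.
Qed.

Lemma dn_grid {R : realType} (c0 e x : R) : exists j : nat, dn c0 e x = c0 + j%:R * e.
Proof. by eexists. Qed.
Lemma Linf_mm (d : measure_display) (T : measurableType d) (R : realType)
  (h k : T -> R) (c : R) : Linf h -> Linf k ->
  Linf (fun w => Num.max (k w) (Num.min (h w) c)).
Proof.
move=> [mh [Mh hM]] [mk [Mk kM]]; split.
  apply: measurable_maxr => //; apply: measurable_minr => //; exact: measurable_cst.
exists (Mk + Mh + `|c|) => w.
have := hM w; have := kM w; have := normr_ge0 (h w); have := normr_ge0 (k w);
have := normr_ge0 c.
case: (leP (k w) (Num.min (h w) c)) => _; last lra.
case: (leP (h w) c) => _; lra.
Qed.

Lemma meas_A (d : measure_display) (T : measurableType d) (R : realType)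
  (h k : T -> R) (c : R) : Linf h -> Linf k ->
  measurable [set w | (c <= h w) && (k w < c)].
Proof.
move=> [mh _] [mk _].
have mb : measurable_fun setT (fun w => (c <= h w) && (k w < c)).
  apply: measurable_and.
    by apply: measurable_fun_ler => //; exact: measurable_cst.
  by apply: measurable_fun_ltr => //; exact: measurable_cst.
have := mb measurableT [set true] I.
by rewrite setTI.
Qed.

Lemma maxP' {R : realType} (x y : R) :
  (Num.max x y = x /\ y <= x) \/ (Num.max x y = y /\ x <= y).
Proof. by case: (leP x y) => H; [right|left]; split => //; apply: ltW. Qed.
Lemma minP' {R : realType} (x y : R) :
  (Num.min x y = x /\ x <= y) \/ (Num.min x y = y /\ y <= x).
Proof. by case: (leP x y) => H; [left|right]; split => //; apply: ltW. Qed.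

Ltac crunch := intros; repeat (let H := fresh in
  match goal with
  | |- context [Num.min ?x ?y] => destruct (minP' x y) as [[H ?]|[H ?]]; rewrite H; clear H
  | |- context [Num.max ?x ?y] => destruct (maxP' x y) as [[H ?]|[H ?]]; rewrite H; clear H
  end); lra.

Lemma splice_in (d : measure_display) (T : measurableType d) (R : realType)
  (A : set T) (f g : T -> R) w : A w -> splice A f g w = f w.
Proof.
move=> Aw; rewrite /splice !indicE mem_set // memNset; last by move/(_ Aw).
by rewrite mulr1 mulr0 addr0.
Qed.
Lemma splice_out (d : measure_display) (T : measurableType d) (R : realType)
  (A : set T) (f g : T -> R) w : ~ A w -> splice A f g w = g w.
Proof.
move=> Aw; rewrite /splice !indicE memNset // mem_set //.
by rewrite mulr1 mulr0 add0r.
Qed.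

Lemma Linf_cst (d : measure_display) (T : measurableType d) (R : realType) (x : R) :
  Linf (cst x : T -> R).
Proof. by split; [exact: measurable_cst| exists `|x|]. Qed.

Lemma grid_le {R : realType} (c0 e v : R) (j m : nat) : 0 < e ->
  v = c0 + j%:R * e -> v < c0 + m.+1%:R * e -> v <= c0 + m%:R * e.
Proof.
move=> e0 ->; rewrite ltrD2l ltr_pM2r // ltr_nat ltnS => H.
by rewrite lerD2l ler_pM2r // ler_nat.
Qed.

Lemma chain (d : measure_display) (T : measurableType d) (R : realType)
  (pref : (T -> R) -> (T -> R) -> Prop) :
  preference_order pref -> SM pref -> forall (h k : T -> R) (c0 e : R),
  0 < e -> Linf h -> Linf k -> (forall w, k w <= h w) -> (forall w, c0 <= k w) ->
  (forall w, exists j : nat, k w = c0 + j%:R * e) ->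
  (forall w, exists j : nat, h w = c0 + j%:R * e) -> pref h k.
Proof.
move=> [PC1 PC2] HSM h k c0 e e0 Lh Lk kh ck gk gh.
pose c m := c0 + m%:R * e.
have cS m : c m.+1 = c m + e by rewrite /c -natr1 mulrDl mul1r addrA.
pose km m := fun w => Num.max (k w) (Num.min (h w) (c m)).
have Lkm m : Linf (km m) := @Linf_mm _ _ _ h k (c m) Lh Lk.
have refl f : Linf f -> pref f f by move=> Lf; case: (PC1 f f Lf Lf).
have step m : pref (km m.+1) (km m).
  pose A := [set w | (c m.+1 <= h w) && (k w < c m.+1)].
  have mA : measurable A := @meas_A _ _ _ h k (c m.+1) Lh Lk.
  have E : forall w, A w -> k w <= c m /\ c m.+1 <= h w.
    move=> w /andP[H1 H2]; split => //.
    have [j Hj] := gk w; exact: (grid_le _ _ _ _ _ e0 Hj H2).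
  have E' : forall w, ~ A w -> (h w <= c m /\ k w <= h w) \/ c m.+1 <= k w.
    move=> w Aw; have [H|H] := leP (c m.+1) (h w); have [H'|H'] := ltP (k w) (c m.+1).
    - by exfalso; apply: Aw; apply/andP.
    - by right.
    - by left; split => //; have [j Hj] := gh w; exact: (grid_le _ _ _ _ _ e0 Hj H).
    - by right.
  have E0 : km m = splice A (cst (c m)) (km m).
    apply/funext => w; case: (pselect (A w)) => Aw.
      rewrite splice_in //=; have [H1 H2] := E w Aw; have := cS m; have := e0; rewrite /km; crunch.
    by rewrite splice_out.
  have E1 : km m.+1 = splice A (cst (c m.+1)) (km m).
    apply/funext => w; case: (pselect (A w)) => Aw.
      rewrite splice_in //=; have [H1 H2] := E w Aw; have := cS m; have := e0; rewrite /km; crunch.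
    rewrite splice_out //; have := E' w Aw; have := cS m; have := e0; rewrite /km.
    move=> ? ? [[H1 H2]|H1]; crunch.
  case: (pselect (null_event pref A)) => [[_ Hn]|Hnn].
    have [H _] := Hn (cst (c m.+1)) (km m) (@Linf_cst _ _ _ (c m.+1)) (Lkm m).
    by rewrite E1.
  have [H _] := HSM A mA Hnn (km m) (Lkm m) (c m.+1) (c m) ltac:(rewrite cS; lra).
  by rewrite -E0 -E1 in H.
have chainm m : pref (km m) (km 0).
  elim: m => [|m IH]; first exact: refl.
  exact: (PC2 _ _ _ (Lkm _) (Lkm _) (Lkm _) (step m) IH).
have K0 : km 0 = k.
  apply/funext => w; have := ck w; rewrite /km /c mul0r addr0; crunch.
have [_ [Mh hM]] := Lh.
pose M := (Num.truncn ((Mh - c0) / e)).+1.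
have KM : km M = h.
  apply/funext => w; have := hM w; have := ler_norm (h w); have := kh w.
  have : (Mh - c0) / e < M%:R by exact: truncnS_gt.
  rewrite ltr_pdivrMr // => HM.
  rewrite /km /c; crunch.
by have := chainm M; rewrite K0 KM.
Qed.

Lemma approx_bound {R : realType} (c0 e s x Mx : R) : 0 < e -> 0 <= s <= 1 ->
  c0 <= x -> `|x| <= Mx -> `|dn c0 e x + s| <= `|c0| + Mx + 1.
Proof.
move=> e0 /andP[s0 s1] cx xM.
have [H1 H2 H3] := dn_prop _ _ _ e0 cx.
have := ler_norm x; have := ler_norm (- c0); rewrite normrN => ? ?.
have := normr_ge0 x; have := normr_ge0 c0 => ? ?.
rewrite ler_norml; apply/andP; split; lra.
Qed.

Lemma Linf_approx (d : measure_display) (T : measurableType d) (R : realType)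
  (f : T -> R) (c0 e s : R) : 0 < e -> 0 <= s <= 1 -> Linf f -> (forall w, c0 <= f w) ->
  Linf (fun w => dn c0 e (f w) + s).
Proof.
move=> e0 s01 [mf [Mf fM]] cf; split.
  apply: measurable_funD; last exact: measurable_cst.
  exact: (measurableT_comp (nondecreasing_measurable measurableT (dn_mono c0 e e0)) mf).
by exists (`|c0| + Mf + 1) => w; apply: approx_bound.
Qed.

Lemma cvg_approx {R : realType} (u : nat -> R) (l a : R) :
  (forall n, `|u n - l| <= a / n.+1%:R) -> u @ \oo --> l.
Proof.
move=> H; apply/cvgrPdist_le => eps eps0.
exists (Num.truncn (a / eps)) => // n /= Hn.
rewrite distrC; apply: (le_trans (H n)).
have h1 : a / eps < (Num.truncn (a / eps)).+1%:R by exact: truncnS_gt.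
have h2 : (Num.truncn (a / eps)).+1%:R <= n.+1%:R :> R by rewrite ler_nat ltnS.
have h3 := ler_wpM2l (ltW eps0) h2.
rewrite ler_pdivrMr //; rewrite ltr_pdivrMr // in h1; lra.
Qed.

Theorem mainTheorem12 (d : measure_display) (T : measurableType d) (R : realType)
  (pref : (T -> R) -> (T -> R) -> Prop) :
  preference_order pref -> SM pref -> PC pref ->
  forall f g : T -> R, Linf f -> Linf g ->
    (forall w, g w <= f w) -> pref f g.
Proof.
move=> PO HSM HPC f g Lf Lg gf.
have [PC1 PC2] := PO.
case: (PC1 f g Lf Lg) => [//|Hgf].
case: (pselect (pref f g)) => [//|Hnfg].
have sgf : spref pref g f by [].
have Lf' := Lf; have Lg' := Lg.
move: Lf' Lg' => [mf [Mf fM]] [mg [Mg gM]].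
pose c0 := - Mg.
have cg w : c0 <= g w.
  by have := gM w; rewrite ler_norml /c0 => /andP[].
have cf w : c0 <= f w by apply: le_trans (cg w) (gf w).
pose e (n : nat) : R := (n.+1%:R)^-1.
have e0 n : 0 < e n by rewrite /e invr_gt0 ltr0n.
have e1 n : e n <= 1 by rewrite /e invf_le1 // ?ler1n // ltr0n.
pose fn n := fun w => dn c0 (e n) (f w) + e n.
have Lfn n : Linf (fn n).
  by apply: Linf_approx => //; apply/andP; split; [exact: ltW|].
have fnB : exists M : R, forall n w, `|fn n w| <= M.
  exists (`|c0| + Mf + 1) => n w; apply: approx_bound => //.
  by apply/andP; split; [exact: ltW|].
have fnC w : (fun n => fn n w) @ \oo --> f w.
  apply: (cvg_approx _ _ 1) => n.
  have [H1 H2 H3] := dn_prop c0 (e n) (f w) (e0 n) (cf w).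
  rewrite div1r -/(e n) /fn ler_norml; apply/andP; split; lra.
have [P1 _] := HPC fn f g Lfn Lf Lg fnB fnC.
have [N HN] := P1 sgf.
pose n := N.+1.
have sgF : spref pref g (fn n) := HN n (ltnSn N).
pose F := fn n.
pose e' (m : nat) := e n / m.+1%:R.
have e'0 m : 0 < e' m by rewrite /e' divr_gt0 // ltr0n.
have e'1 m : e' m <= 1.
  rewrite /e' ler_pdivrMr ?ltr0n // mul1r; apply: le_trans (e1 n) _.
  by rewrite ler1n.
pose gm m := fun w => dn c0 (e' m) (g w) + 0.
have Lgm m : Linf (gm m).
  by apply: Linf_approx => //; apply/andP; split.
have gmB : exists M : R, forall m w, `|gm m w| <= M.
  exists (`|c0| + Mg + 1) => m w; apply: approx_bound => //.
  by apply/andP; split.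
have gmC w : (fun m => gm m w) @ \oo --> g w.
  apply: (cvg_approx _ _ (e n)) => m.
  have [H1 H2 H3] := dn_prop c0 (e' m) (g w) (e'0 m) (cg w).
  rewrite -/(e' m) /gm ler_norml; apply/andP; split; lra.
have [_ P2] := HPC gm g F Lgm Lg (Lfn n) gmB gmC.
have [N' HN'] := P2 sgF.
have [_ Hn] := HN' N'.+1 (ltnSn N').
exfalso; apply: Hn.
apply: (chain _ _ _ _ PO HSM F (gm N'.+1) c0 (e' N'.+1)) => //.
all: try (first [exact: Lfn | exact: Lgm | exact: e'0]).

- move=> w; have [H1 H2 H3] := dn_prop c0 (e' N'.+1) (g w) (e'0 _) (cg w).
  have [K1 K2 K3] := dn_prop c0 (e n) (f w) (e0 n) (cf w).
  have := gf w; rewrite /gm /F /fn; lra.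
- move=> w; have [H1 H2 H3] := dn_prop c0 (e' N'.+1) (g w) (e'0 _) (cg w).
  by rewrite /gm addr0.
- by move=> w; rewrite /gm addr0; apply: dn_grid.
- move=> w; have [j Hj] := dn_grid c0 (e n) (f w).
  exists (j.+1 * N'.+2)%N; rewrite /F /fn Hj /e' natrM -natr1.
  field; apply/negbT/gt_eqF; have := ler0n R N'; lra.
Qed.
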